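(* Let $n\ge 2$, let $J\subseteq[n]$, let $i\in[n]\setminus J$ and $J'=J\cup\{i\}$. Let $D=D_{i,J}$ be the $\Omega_{J'}\times\Omega_J$ matrix with $D(v,u)=1$ if $v=\varphi_i(u)$ and $D(v,u)=0$ otherwise. Then \[ D_{i,J}M_J=M_{J'}D_{i,J}. \]
   Context: Type C TASEP. Fix $n\ge 2$. There are $2n$ sites: upper $U_1,\dots,U_n$ and lower $L_1,\dots,L_n$, with counter-clockwise successor $\mathrm{succ}(U_j)=U_{j-1}$ ($j\ge2$), $\mathrm{succ}(U_1)=L_1$, $\mathrm{succ}(L_j)=L_{j+1}$ ($j<n$), $\mathrm{succ}(L_n)=U_n$. A state places particles with positive integer classes on sites, at most one particle per column. Ringing the bell at site $s$: if $s$ holds particle $p$ and $s'=\mathrm{succ}(s)$ is empty, $p$ moves to $s'$; if $s'$ holds a particle of strictly larger class, they swap; otherwise nothing. $\sigma_0$ = bell at $U_1$; $\sigma_n$ = bell at $L_n$; for $0<j<n$, $\sigma_j$ = bells at $L_j$ and $U_{j+1}$ (they commute). The chain $\Theta$ has transitions $x\to\sigma_jx$, $j=0,\dots,n$, of rate $1$ for $j\in\{0,n\}$ and $2$ for $0<j<n$. For $J\subseteq[n]$: starting from one particle of each class $1,\dots,n$, identify classes $j,j+1$ for each $j\in J\setminus\{n\}$, remove class $n$ if $n\in J$, renumber; the resulting counts form the type $\mathbf m_J$ and $\Omega_J$ is the set of states of type $\mathbf m_J$; $\Theta_J$ is $\Theta$ restricted to $\Omega_J$. For $i\notin J$, $\varphi_i:\Omega_J\to\Omega_{J'}$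 ($J'=J\cup\{i\}$) merges the two classes separated at $i$ if $i<n$, or removes all particles of the largest class if $i=n$, then renumbers. Transition matrix convention: $M_J$ is the $\Omega_J\times\Omega_J$ matrix whose $(x,y)$ entry is the total rate of all transitions of $\Theta_J$ from $y$ to $x$ (including transitions $y\to y$); with this convention the stationary distribution $\pi_J$ satisfies $M_J\pi_J=2n\,\pi_J$. *)

(* Defs.v *)
(* Type C TASEP, 0-indexed encoding. *)
From mathcomp Require Import all_boot.

Set Implicit Arguments.
Unset Strict Implicit.
Unset Printing Implicit Defensive.

(* Column j : 'I_n stands for column j+1; a site is (column, is_upper):
   (j, true) = U_{j+1}, (j, false) = L_{j+1}.
   A class c : 'I_n stands for class c+1 (same order). *)
Definition site (n : nat) := ('I_n * bool)%type.

(* A (possibly invalid) configuration: contents of each site. *)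
Definition state (n : nat) := {ffun site n -> option 'I_n}.

Definition succ_site n (s : site n) : site n :=
  let: (j, up) := s in
  if up then (if 0 < val j then (insubd j j.-1, true) else (j, false))
  else (if j.+1 < n then (insubd j j.+1, false) else (j, true)).

Definition swap_sites n (s t : site n) (x : state n) : state n :=
  [ffun r => if r == s then x t else if r == t then x s else x r].

Definition bell n (s : site n) (x : state n) : state n :=
  let t := succ_site s in
  match x s with
  | Some p =>
      match x t with
      | None => swap_sites s t x
      | Some q => if p < q then swap_sites s t x else x
      end
  | None => x
  end.

Definition bellN n (c : nat) (up : bool) (x : state n) : state n :=
  if @insub nat (fun k => k < n) _ c is Some o then bell (o, up) x else x.

Definition sigma n (j : nat) (x : state n) : state n :=
  if j == 0 then bellN 0 true x
  else if j == n then bellN n.-1 false x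
  else bellN j.-1 false (bellN j true x).           (* bells at L_j, U_{j+1} *)

Definition rate n (j : nat) : nat := if (j == 0) || (j == n) then 1 else 2.

(* J : {set 'I_n}, where j : 'I_n stands for j+1 in [n]. *)

(* number of j in [1, m] (1-indexed) with j not in J *)
Definition cnt n (J : {set 'I_n}) (m : nat) : nat :=
  #|[set j : 'I_n | (j < m) && (j \notin J)]|.

(* n \in J *)
Definition lastInJ n (J : {set 'I_n}) : bool :=
  [exists l : 'I_n, (val l == n.-1) && (l \in J)].

(* the (renumbered) class of the original particle of class k+1 after
   identifying k', k'+1 for k' in J\{n} and removing the class containing n
   if n in J; None = removed *)
Definition cls n (J : {set 'I_n}) (k : 'I_n) : option 'I_n :=
  if lastInJ J && (cnt J k == cnt J n.-1) then None
  else Some (insubd k (cnt J k)).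

Definition mtype n (J : {set 'I_n}) (c : 'I_n) : nat :=
  #|[set k : 'I_n | cls J k == Some c]|.

Definition Omega n (J : {set 'I_n}) : {set state n} :=
  [set x : state n |
     [forall j : 'I_n, ~~ ((x (j, true) != None) && (x (j, false) != None))]
  && [forall c : 'I_n, #|[set s : site n | x s == Some c]| == mtype J c]].

(* M_J(x,y) = total rate of transitions y -> x of Theta_J *)
Definition Mmat n (J : {set 'I_n}) (x y : state n) : nat :=
  if (x \in Omega J) && (y \in Omega J) then
    \sum_(j < n.+1) rate n j * (sigma j y == x)
  else 0.

Definition relabel n (J : {set 'I_n}) (i : 'I_n) (a : 'I_n) : option 'I_n :=
  if i.+1 < n then
    (* i < n (1-indexed): merge the J-classes of i and i+1.  If the class
       of i+1 is the removed one (n \in J), merging with it means removal. *)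
    if lastInJ J && (cnt J i.+1 == cnt J n.-1) then
      (if val a == cnt J i then None else Some a)
    else Some (if a <= cnt J i then a else insubd a a.-1)
  else
    (* i = n: remove the largest class (the class of n) *)
    if val a == cnt J i then None else Some a.

Definition phi n (J : {set 'I_n}) (i : 'I_n) (x : state n) : state n :=
  [ffun s => obind (relabel J i) (x s)].

Definition Dmat n (J : {set 'I_n}) (i : 'I_n) (v u : state n) : nat :=
  if (v \in Omega (J :|: [set i])) && (u \in Omega J) then (v == phi J i u : nat)
  else 0.

(* Main.v *)
Require Import Defs.
From mathcomp Require Import all_boot zify.
Set Implicit Arguments. Unset Strict Implicit. Unset Printing Implicit Defensive.

Section S.
Variable n : nat.
Implicit Types (x y : state n) (s t : site n).

Definition bcond (p q : option 'I_n) : bool :=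
  match p, q with
  | Some p, None => true
  | Some p, Some q => p < q
  | _, _ => false end.

Lemma bellE s x : bell s x =
  if bcond (x s) (x (succ_site s)) then swap_sites s (succ_site s) x else x.
Proof.
rewrite /bell; case: (x s) => [p|] //=; case: (x _) => [q|] //=.
Qed.

Definition tp s t r : site n := if r == s then t else if r == t then s else r.

Lemma tpK s t : involutive (tp s t).
Proof.
move=> r; rewrite /tp.
case: (eqVneq r s) => [->|rs].
  by rewrite eqxx; case: (eqVneq t s) => [->|]; rewrite ?eqxx.
case: (eqVneq r t) => [->|rt]; first by rewrite eqxx.
by rewrite (negbTE rs) (negbTE rt).
Qed.

Lemma swapE s t x r : swap_sites s t x r = x (tp s t r).
Proof. by rewrite /swap_sites ffunE /tp; case: ifP => //; case: ifP. Qed.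

Lemma card_swap s t x c :
  #|[set r | swap_sites s t x r == Some c]| = #|[set r | x r == Some c]|.
Proof.
rewrite -(card_preimset [set r | x r == Some c] (can_inj (tpK s t))).
by apply: eq_card => r; rewrite !inE swapE.
Qed.

Lemma card_bell s x c :
  #|[set r | bell s x r == Some c]| = #|[set r | x r == Some c]|.
Proof. by rewrite bellE; case: ifP => // _; apply: card_swap. Qed.

Lemma card_bellN k b x c :
  #|[set r | bellN k b x r == Some c]| = #|[set r | x r == Some c]|.
Proof. by rewrite /bellN; case: insubP => // o _ _; apply: card_bell. Qed.

Lemma card_sigma j x c :
  #|[set r | sigma j x r == Some c]| = #|[set r | x r == Some c]|.
Proof.
rewrite /sigma; case: ifP => _; first exact: card_bellN.
case: ifP => _; first exact: card_bellN.
by rewrite !card_bellN.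
Qed.

End S.

Section S.
Variable n : nat.
Implicit Types (x y : state n) (s t : site n).

Definition colok x := forall k : 'I_n,
  ~~ ((x (k, true) != None) && (x (k, false) != None)).

Lemma bell_col k b x : succ_site (k, b) = (k, ~~ b) -> colok x -> colok (bell (k, b) x).
Proof.
move=> hs H; rewrite bellE hs; case: ifP => // _ k'.
rewrite !swapE /tp ?xpair_eqE.
case: (eqVneq k' k) => [->|ne]; last by rewrite /= ?andbF; apply: H.
by case: b hs => _ /=; rewrite andbC; apply: H.
Qed.

Lemma two_bells (p q : 'I_n) x : p != q ->
  succ_site (p, true) = (q, true) -> succ_site (q, false) = (p, false) ->
  colok x -> colok (bell (q, false) (bell (p, true) x)).
Proof.
move=> pq h1 h2 H.
have Hp := H p; have Hq := H q.
have qp : q != p by rewrite eq_sym.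
rewrite (bellE (p,true)) h1; case: ifP => C1;
rewrite bellE h2; case: ifP => C2 k;
rewrite ?swapE /tp ?xpair_eqE ?eqxx /= ?(negbTE pq) ?(negbTE qp) ?andbF ?andbT /= in C2 *;
(case: (eqVneq k p) => [->|kp]; [idtac |
 case: (eqVneq k q) => [->|kq]; [idtac | rewrite ?(negbTE kp) ?(negbTE kq) /= ?xpair_eqE /= ?(negbTE kp) ?(negbTE kq) /=; try apply: H]]);
rewrite ?xpair_eqE ?eqxx /= ?(negbTE pq) ?(negbTE qp) ?andbF ?andbT /=;
move: C1 C2 Hp Hq;
by case: (x (p,true)) => [?|]; case: (x (q,true)) => [?|]; case: (x (q,false)) => [?|];
  case: (x (p,false)) => [?|].
Qed.
End S.

Lemma sigma_col (n : nat) (j : nat) (x : state n) : 2 <= n -> j <= n -> colok x -> colok (sigma j x).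
Proof.
move=> n2 jn H; rewrite /sigma.
case: ifP => [/eqP j0|j0].
  rewrite /bellN; case: insubP => [o _ ho|/negP[]]; last by rewrite (leq_trans _ n2).
  by apply: bell_col => //=; rewrite ho.
case: ifP => [/eqP jn'|jn'].
  rewrite /bellN; case: insubP => [o _ ho|/negP[]]; last by rewrite ltn_predL (leq_trans _ n2).
  by apply: bell_col => //=; rewrite ho prednK ?ltnn // (leq_trans _ n2).
have jlt : j < n by rewrite ltn_neqAle jn' jn.
have jpos : 0 < j by rewrite lt0n j0.
rewrite /bellN; case: insubP => [o' _ ho'|/negP[]]; last by rewrite /= (leq_ltn_trans (leq_pred j)).
case: insubP => [o _ ho|/negP[]]; last by [].
have e1 : insubd o j.-1 = o' by apply: val_inj; rewrite val_insubd ho' (leq_ltn_trans (leq_pred j)).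
have ho2 : nat_of_ord o' = j.-1 := ho'.
have ho3 : nat_of_ord o = j := ho.
have e2 : insubd o' j = o by apply: val_inj; rewrite val_insubd jlt ho.
apply: two_bells => //=.
- by rewrite -(inj_eq val_inj) ho ho' neq_ltn ltn_predL jpos orbT.
- by rewrite ho3 jpos e1.
- by rewrite ho2 prednK // jlt e2.
Qed.

Section S.
Variable n : nat.
Implicit Types (x y : state n) (s t : site n).

Definition ole (a b : option 'I_n) := match a, b with
  | _, None => true | None, Some _ => false | Some a, Some b => a <= b end.
Definition mapst (f : 'I_n -> option 'I_n) x : state n := [ffun r => obind f (x r)].
Definition bnd (K : nat) x := forall r c, x r = Some c -> c <= K.

Lemma swap_id s t y : y s = y t -> swap_sites s t y = y.
Proof.
move=> e; apply/ffunP => r; rewrite ffunE.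
by case: (eqVneq r s) => [->|_] //; case: (eqVneq r t) => [->|_].
Qed.

Lemma map_swap f s t x : mapst f (swap_sites s t x) = swap_sites s t (mapst f x).
Proof. by apply/ffunP => r; rewrite !ffunE; case: ifP => _ //; case: ifP. Qed.

Lemma bnd_bell K s x : bnd K x -> bnd K (bell s x).
Proof.
move=> H r c; rewrite bellE; case: ifP => _; last exact: H.
rewrite swapE; exact: H.
Qed.

Lemma map_bell f K s x :
  (forall a b : 'I_n, a <= b -> b <= K -> ole (f a) (f b)) ->
  bnd K x -> mapst f (bell s x) = bell s (mapst f x).
Proof.
move=> mono H; rewrite !bellE.
set t := succ_site s.
have es : mapst f x s = obind f (x s) by rewrite ffunE.
have et : mapst f x t = obind f (x t) by rewrite ffunE.
have key : bcond (x s) (x t) != bcond (obind f (x s)) (obind f (x t)) ->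
   obind f (x s) = obind f (x t).
  case hs: (x s) => [p|]; case ht: (x t) => [q|] //=; last by case: (f p).
  have bp := H _ _ hs; have bq := H _ _ ht.
  have m1 := mono p q; have m2 := mono q p.
  case fp: (f p) => [a|]; case fq: (f q) => [b|] //=; rewrite fp fq /= in m1 m2.
  - case: (ltnP p q) => pq.
      have ab := m1 (ltnW pq) bq; rewrite ltnNge.
      case: (leqP b a) => //= ba _.
      by congr Some; apply: val_inj; apply/eqP; rewrite eqn_leq ab.
    by have := m2 pq bp; rewrite ltnNge => ->.
  - by case: (ltnP p q) => pq //; have := m2 pq bp.
  - by case: (ltnP p q) => pq //; have := m1 (ltnW pq) bq.
case: ifP => C1; case: ifP => C2; rewrite ?map_swap //.
- apply: swap_id; rewrite es et; apply: key; by rewrite C1 -es -et C2.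
- apply/esym/swap_id; rewrite es et; apply: key; by rewrite C1 -es -et C2.
Qed.
End S.

Section S.
Variable n : nat.
Implicit Types (x y u : state n) (s t : site n) (J : {set 'I_n}).

Lemma map_bellN f K c b x :
  (forall a b : 'I_n, a <= b -> b <= K -> ole (f a) (f b)) ->
  bnd K x -> mapst f (bellN c b x) = bellN c b (mapst f x).
Proof. by move=> m H; rewrite /bellN; case: insubP => // o _ _; apply: map_bell m H. Qed.

Lemma bnd_bellN K c b x : bnd K x -> bnd K (bellN c b x).
Proof. by move=> H; rewrite /bellN; case: insubP => // o _ _; apply: bnd_bell. Qed.

Lemma map_sigma f K j x :
  (forall a b : 'I_n, a <= b -> b <= K -> ole (f a) (f b)) ->
  bnd K x -> mapst f (sigma j x) = sigma j (mapst f x).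
Proof.
move=> m H; rewrite /sigma; case: ifP => _; first exact: map_bellN m H.
case: ifP => _; first exact: map_bellN m H.
rewrite (@map_bellN f K j.-1 false (bellN j true x) m) ?(@map_bellN f K j true x m) //. exact: bnd_bellN.
Qed.

Lemma cnt_mono J m m' : m <= m' -> cnt J m <= cnt J m'.
Proof.
move=> mm; apply: subset_leq_card; apply/subsetP => j; rewrite !inE.
by case/andP => h ->; rewrite (leq_trans h mm).
Qed.

Lemma cnt_lt J (k : 'I_n) : cnt J k < n.
Proof.
have n0 : 0 < n by apply: leq_ltn_trans (ltn_ord k).
apply: (@leq_ltn_trans #|[set~ k]|); last by rewrite cardsC1 card_ord prednK.
apply: subset_leq_card; apply/subsetP => j; rewrite !inE.
by case/andP => h _; apply/eqP => e; rewrite e ltnn in h.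
Qed.

Lemma omega_cls J u r c : u \in Omega J -> u r = Some c ->
  exists k : 'I_n, ~~ (lastInJ J && (cnt J k == cnt J n.-1)) /\ val c = cnt J k.
Proof.
rewrite inE => /andP[_ /forallP/(_ c)/eqP hc] hr.
have : 0 < mtype J c by rewrite -hc card_gt0; apply/set0Pn; exists r; rewrite inE hr.
rewrite card_gt0 => /set0Pn[k]; rewrite inE /cls.
case: ifP => // h /eqP[<-]; exists k; split; first by rewrite h.
by rewrite val_insubd cnt_lt.
Qed.

Lemma monoA (K : nat) (a b : 'I_n) : a <= b -> b <= K ->
  ole (if val a == K then None else Some a) (if val b == K then None else Some b).
Proof.
move=> ab bK; case: (eqVneq (val b) K) => [//|bK']; first by case: ifP.
have bK2 : b < K by rewrite ltn_neqAle bK' bK.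
have -> : (val a == K) = false by apply/negbTE; rewrite neq_ltn (leq_ltn_trans ab bK2).
exact: ab.
Qed.

Lemma rel_ok J i u : u \in Omega J -> exists K,
  (forall a b : 'I_n, a <= b -> b <= K -> ole (relabel J i a) (relabel J i b)) /\ bnd K u.
Proof.
move=> hu; unfold relabel; case hi: (i.+1 < n).
  case hl: (lastInJ J && (cnt J i.+1 == cnt J n.-1)).
    exists (cnt J i); split; first by move=> a b; apply: monoA.
    move=> r c /(omega_cls hu)[k [hk hc]]; rewrite (_ : nat_of_ord c = cnt J k) //.
    case: (leqP k i) => ki; first exact: cnt_mono.
    case/andP: hl => hl /eqP e.
    have h1 : cnt J i.+1 <= cnt J k by apply: cnt_mono.
    have h2 : cnt J k <= cnt J n.-1 by apply: cnt_mono; rewrite -ltnS prednK // (leq_ltn_trans _ (ltn_ord k)).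
    by move: hk; rewrite hl /=; lia.
  exists n; split; last by move=> r c _; apply: ltnW.
  move=> a b ab _ /=.
  have va : forall z : 'I_n, nat_of_ord (insubd z z.-1) = z.-1.
    by move=> z; rewrite val_insubd (leq_ltn_trans (leq_pred _) (ltn_ord z)).
  case: ifP => ha; case: ifP => hb; rewrite ?va //.
  all: rewrite /= ?va; try lia.
exists (cnt J i); split; first by move=> a b; apply: monoA.
move=> r c /(omega_cls hu)[k [hk hc]]; rewrite (_ : nat_of_ord c = cnt J k) //.
apply: cnt_mono; rewrite -ltnS (leq_trans (ltn_ord k)) //.
by rewrite leqNgt hi.
Qed.

End S.

Lemma omegaP n (J : {set 'I_n}) x : x \in Omega J =
  [forall j : 'I_n, ~~ ((x (j, true) != None) && (x (j, false) != None))]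
  && [forall c : 'I_n, #|[set s : site n | x s == Some c]| == mtype J c].
Proof. by rewrite inE. Qed.

Lemma colokP n (x : state n) : colok x <-> [forall j : 'I_n, ~~ ((x (j, true) != None) && (x (j, false) != None))].
Proof. by split => [H|/forallP H k]; [apply/forallP => k; apply: H | apply: H]. Qed.

Lemma sigma_omega n (J : {set 'I_n}) j x : 2 <= n -> j <= n -> x \in Omega J -> sigma j x \in Omega J.
Proof.
move=> n2 jn; rewrite !omegaP => /andP[/colokP hc /forallP hm].
apply/andP; split; first by apply/colokP; apply: sigma_col.
by apply/forallP => c; rewrite card_sigma; apply: hm.
Qed.

Lemma phi_col n (J : {set 'I_n}) i x : colok x -> colok (phi J i x).
Proof.
move=> H k; rewrite !ffunE; move: (H k).
by case: (x (k, true)) => [?|]; case: (x (k, false)) => [?|] //=; case: (relabel _ _ _).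
Qed.

Lemma phi_sigma n (J : {set 'I_n}) i j u : u \in Omega J ->
  phi J i (sigma j u) = sigma j (phi J i u).
Proof.
move=> hu; have [K [m b]] := rel_ok i hu.
exact: (map_sigma j m b).
Qed.

Lemma phi_back n (J J' : {set 'I_n}) i j u : u \in Omega J ->
  sigma j (phi J i u) \in Omega J' -> phi J i u \in Omega J'.
Proof.
rewrite !omegaP => /andP[/colokP hc _] /andP[_ /forallP hm].
apply/andP; split; first by apply/colokP; apply: phi_col.
by apply/forallP => c; rewrite -(card_sigma j); apply: hm.
Qed.

Theorem proposition2 (n : nat) (J : {set 'I_n}) (i : 'I_n) :
  2 <= n -> i \notin J ->
  forall v u : state n,
    v \in Omega (J :|: [set i]) -> u \in Omega J ->
    \sum_(w in Omega J) Dmat J i v w * Mmat J w u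
    = \sum_(w in Omega (J :|: [set i])) Mmat (J :|: [set i]) v w * Dmat J i w u.
Proof.
move=> n2 _ v u hv hu.
set J' := J :|: [set i].
have L : \sum_(w in Omega J) Dmat J i v w * Mmat J w u =
   \sum_(j < n.+1) rate n j * (v == sigma j (phi J i u)).
  rewrite (eq_bigr (fun w => \sum_(j < n.+1) rate n j * ((sigma j u == w) && (v == phi J i w)))); last first.
    move=> w hw; rewrite /Dmat /Mmat hv hw hu /= big_distrr /=.
    by apply: eq_bigr => j _; rewrite mulnCA mulnb andbC.
  rewrite exchange_big /=; apply: eq_bigr => j _.
  rewrite -big_distrr /=; congr (_ * _).
  have hs : sigma j u \in Omega J by apply: sigma_omega => //; exact: ltn_ord j.
  rewrite (bigD1 (sigma j u)) //= eqxx /= big1 ?addn0; first by rewrite phi_sigma.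
  by move=> w /andP[_ hw]; rewrite eq_sym (negbTE hw).
rewrite L.
case hp: (phi J i u \in Omega J').
  rewrite [RHS](bigD1 (phi J i u)) //= [X in _ = _ + X]big1 ?addn0.
    rewrite /Dmat /Mmat hp hu hv eqxx /= muln1.
    by apply: eq_bigr => j _; rewrite eq_sym.
  by move=> w /andP[hw hw']; rewrite /Dmat hw hu /= (negbTE hw') muln0.
rewrite [RHS]big1; last by move=> w hw; rewrite /Dmat hw hu /=; case: eqP => [e|]; [rewrite -e hw in hp | rewrite muln0].
apply: big1 => j _; case: eqP => [e|]; last by rewrite muln0.
by move: hv; rewrite e => /(phi_back hu); rewrite hp.
Qed.
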